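(* Let $G$ be an infinite group and $\vec m=(m_1,\dots,m_k)\in\mathbb{Z}^k$, $k\in\mathbb{N}$. Then (i) a subset $A\subseteq G$ is a Ramsey $\vec m$-product subset if and only if every infinite subset $X\subseteq G$ contains a countably infinite subset $Y$ such that $y_1^{m_1}y_2^{m_2}\cdots y_k^{m_k}\in A$ for all pairwise distinct $y_1,\dots,y_k\in Y$; (ii) the family $\varphi_{\vec m}$ of all Ramsey $\vec m$-product subsets of $G$ is a filter on $G$.
   Context: A subset $A$ of a group $G$ is a Ramsey $\vec m$-product subset, for $\vec m=(m_1,\dots,m_k)\in\mathbb{Z}^k$, if every infinite subset $X\subseteq G$ contains pairwise distinct $x_1,\dots,x_k\in X$ such that $x_{\sigma(1)}^{m_1}x_{\sigma(2)}^{m_2}\cdots x_{\sigma(k)}^{m_k}\in A$ for every permutation $\sigma\in S_k$. *)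

(* Defs.v *)
From Stdlib Require Import ZArith List Permutation.
Import ListNotations.
Set Implicit Arguments.

Record group_axioms (G : Type) (mul : G -> G -> G) (inv : G -> G) (one : G) : Prop := {
  mul_assoc : forall x y z, mul x (mul y z) = mul (mul x y) z;
  mul_1l : forall x, mul one x = x;
  mul_1r : forall x, mul x one = x;
  mul_Vl : forall x, mul (inv x) x = one;
  mul_Vr : forall x, mul x (inv x) = one
}.

Section Defs.
Variables (G : Type) (mul : G -> G -> G) (inv : G -> G) (one : G).

Fixpoint natpow (x : G) (n : nat) : G :=
  match n with O => one | S n' => mul x (natpow x n') end.

Definition zpow (x : G) (m : Z) : G :=
  match m with
  | Z0 => one
  | Zpos p => natpow x (Pos.to_nat p)
  | Zneg p => inv (natpow x (Pos.to_nat p))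
  end.

Fixpoint prodpow (ms : list Z) (ys : list G) : G :=
  match ms, ys with
  | m :: ms', y :: ys' => mul (zpow y m) (prodpow ms' ys')
  | _, _ => one
  end.

Definition infinite (X : G -> Prop) : Prop :=
  forall l : list G, exists x, X x /\ ~ In x l.

Definition countably_infinite (Y : G -> Prop) : Prop :=
  exists f : nat -> G, (forall i j, f i = f j -> i = j) /\
                       (forall y, Y y <-> exists n, f n = y).

(* A is a Ramsey m-product subset: every infinite X contains pairwise distinct
   x1..xk (k = length ms) with x_{s(1)}^{m1}...x_{s(k)}^{mk} in A for all
   permutations s (a permutation of the list xs). *)
Definition ramsey_product (ms : list Z) (A : G -> Prop) : Prop :=
  forall X : G -> Prop, infinite X ->
    exists xs : list G, length xs = length ms /\ NoDup xs /\
      (forall x, In x xs -> X x) /\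
      (forall ys, Permutation xs ys -> A (prodpow ms ys)).

Definition is_filter (F : (G -> Prop) -> Prop) : Prop :=
  F (fun _ => True) /\
  ~ F (fun _ => False) /\
  (forall A B : G -> Prop, F A -> (forall x, A x -> B x) -> F B) /\
  (forall A B : G -> Prop, F A -> F B -> F (fun x => A x /\ B x)).

End Defs.

(* Main.v *)
Require Import Defs.
From Stdlib Require Import ZArith List.
From Stdlib Require Import Arith Wf_nat Lia List Permutation Classical ClassicalEpsilon.
Import ListNotations.

Fixpoint incr (l : list nat) : Prop :=
  match l with [] => True | a :: l' => (forall x, In x l' -> a < x) /\ incr l' end.

Definition unb (S : nat -> Prop) := forall n, exists m, n <= m /\ S m.

Definition homog (k : nat) (P : list nat -> Prop) (b : bool) (T : nat -> Prop) :=
  forall l, length l = k -> incr l -> (forall x, In x l -> T x) -> (P l <-> b = true).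

Definition rspec k P (S : nat -> Prop) (r : (nat -> Prop) * bool) :=
  (forall x, fst r x -> S x) /\ unb (fst r) /\ homog k P (snd r) (fst r).

Lemma ramsey : forall k P S, unb S -> exists r, rspec k P S r.
Proof.
  induction k as [|k IH]; intros P S0 HS.
  - destruct (classic (P [])) as [H|H].
    + exists (S0, true). split; [auto|split; [auto|]].
      intros l Hl _ _. destruct l; [|discriminate]. simpl. tauto.
    + exists (S0, false). split; [auto|split; [auto|]].
      intros l Hl _ _. destruct l; [|discriminate]. simpl. split; [tauto|discriminate].
  - set (step := fun U : nat -> Prop =>
      let a := epsilon (inhabits 0) (fun a => U a) in
      (a, epsilon (inhabits (U, true))
            (fun r => rspec k (fun l => P (a :: l)) (fun x => U x /\ a < x) r))).
    assert (Hstep : forall U, unb U -> U (fst (step U)) /\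
      rspec k (fun l => P (fst (step U) :: l)) (fun x => U x /\ fst (step U) < x) (snd (step U))).
    { intros U HS'. assert (Ha : U (fst (step U))).
      { simpl. apply epsilon_spec. destruct (HS' 0) as [m [_ Hm]]; eauto. }
      split; [exact Ha|]. simpl. apply epsilon_spec. apply IH.
      intro n. destruct (HS' (Nat.max n (S (fst (step U))))) as [m [Hm1 Hm2]].
      exists m. split; [lia|]. split; [auto|]. simpl in *. lia. }
    set (state := fix st (n : nat) : nat -> Prop :=
      match n with 0 => S0 | S n' => fst (snd (step (st n'))) end).
    set (a := fun n => fst (step (state n))).
    set (c := fun n => snd (snd (step (state n)))).
    assert (Hunb : forall n, unb (state n)).
    { induction n as [|n IHn]; [exact HS|].
      destruct (Hstep _ IHn) as [_ [_ [H _]]]. exact H. }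
    assert (Hin : forall n, state n (a n)).
    { intro n. exact (proj1 (Hstep _ (Hunb n))). }
    assert (Hsub : forall n x, state (S n) x -> state n x /\ a n < x).
    { intros n x Hx. destruct (Hstep _ (Hunb n)) as [_ [H _]]. exact (H x Hx). }
    assert (Hhom : forall n, homog k (fun l => P (a n :: l)) (c n) (state (S n))).
    { intro n. destruct (Hstep _ (Hunb n)) as [_ [_ [_ H]]]. exact H. }
    assert (Hnest : forall i d x, state (d + i) x -> state i x).
    { intros i d x. induction d as [|d IHd]; simpl; auto.
      intro H. apply IHd. apply (Hsub _ _ H). }
    assert (Hmono : forall i d, a i < a (S d + i)).
    { intros i d. induction d as [|d IHd].
      - simpl. apply (Hsub _ _ (Hin (S i))).
      - pose proof (proj2 (Hsub _ _ (Hin (S (S d + i))))). simpl in *. lia. }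
    assert (Hlt : forall i j, i < j -> a i < a j).
    { intros i j Hij. replace j with (S (j - i - 1) + i) by lia. apply Hmono. }
    assert (Hge : forall n, n <= a n).
    { induction n; [lia|]. pose proof (Hlt n (S n) ltac:(lia)). lia. }
    assert (Hpig : exists b, forall n, exists m, n <= m /\ c m = b).
    { destruct (classic (forall n, exists m, n <= m /\ c m = true)) as [H|H]; [eauto|].
      apply not_all_ex_not in H. destruct H as [n0 Hn0]. exists false.
      intro n. exists (Nat.max n n0). split; [lia|].
      destruct (c (Nat.max n n0)) eqn:E; [|reflexivity].
      exfalso. apply Hn0. exists (Nat.max n n0). split; [lia|exact E]. }
    destruct Hpig as [b Hb].
    exists (fun x => exists i, a i = x /\ c i = b, b). split; [|split].
    + simpl. intros x [i [<- _]]. apply (Hnest 0 i). rewrite Nat.add_0_r. apply Hin.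
    + simpl. intro n. destruct (Hb n) as [m [Hm Hc]]. exists (a m).
      split; [pose proof (Hge m); lia|eauto].
    + simpl. intros l Hl Hinc HT. destruct l as [|x l']; [discriminate|].
      simpl in Hl. injection Hl as Hl. destruct Hinc as [Hx Hinc'].
      destruct (HT x (or_introl eq_refl)) as [i [<- Hci]].
      rewrite <- Hci. apply (Hhom i l' Hl Hinc').
      intros y Hy. destruct (HT y (or_intror Hy)) as [j [<- _]].
      pose proof (Hx _ Hy) as Hxy.
      assert (i < j).
      { destruct (Nat.lt_trichotomy i j) as [H|[H|H]]; auto.
        - subst. lia.
        - pose proof (Hlt _ _ H). lia. }
      apply (Hnest (S i) (j - S i)). replace (j - S i + S i) with j by lia. apply Hin.
Qed.
Lemma enum_unb : forall T, unb T -> exists e : nat -> nat,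
  (forall i j, e i = e j -> i = j) /\ (forall x, T x <-> exists n, e n = x).
Proof.
  intros T HT.
  set (nxt := fun m => epsilon (inhabits 0) (fun x => T x /\ m <= x /\ forall y, T y -> m <= y -> x <= y)).
  assert (Hn : forall m, T (nxt m) /\ m <= nxt m /\ forall y, T y -> m <= y -> nxt m <= y).
  { intro m. apply epsilon_spec.
    assert (Hd : forall n, (fun x => T x /\ m <= x) n \/ ~ (fun x => T x /\ m <= x) n) by (intro; apply classic).
    assert (He : exists n, (fun x => T x /\ m <= x) n) by (destruct (HT m) as [x [? ?]]; exists x; auto).
    destruct (dec_inh_nat_subset_has_unique_least_element _ Hd He) as [x [[[H1 H2] H3] _]].
    exists x. split; [exact H1|split; [exact H2|]]. intros y Hy Hmy. apply H3. auto. }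
  set (e := fix e (n : nat) := match n with 0 => nxt 0 | S n' => nxt (S (e n')) end).
  assert (HeT : forall n, T (e n)) by (intros [|n]; apply Hn).
  assert (Hinc : forall n, e n < e (S n)).
  { intro n. simpl. pose proof (proj1 (proj2 (Hn (S (e n))))). lia. }
  assert (Hlt : forall i d, e i < e (S d + i)).
  { intros i d. induction d; simpl in *; [apply Hinc|]. pose proof (Hinc (S (d + i))). simpl in *. lia. }
  assert (Hlt' : forall i j, i < j -> e i < e j).
  { intros i j H. replace j with (S (j - i - 1) + i) by lia. apply Hlt. }
  exists e. split.
  - intros i j H. destruct (Nat.lt_trichotomy i j) as [h|[h|h]]; auto;
      pose proof (Hlt' _ _ h); lia.
  - intro x. split; [|intros [n <-]; apply HeT].
    intro Hx. apply NNPP. intro Hno.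
    assert (forall n, e n < x).
    { induction n.
      - assert (e 0 <= x) by (apply (proj2 (proj2 (Hn 0))); auto; lia).
        assert (e 0 <> x) by (intro; apply Hno; eauto). lia.
      - assert (e (S n) <= x) by (apply (proj2 (proj2 (Hn (S (e n))))); auto).
        assert (e (S n) <> x) by (intro; apply Hno; eauto). lia. }
    assert (Hge : forall n, n <= e n).
    { induction n; [lia|]. pose proof (Hinc n). lia. }
    pose proof (H x). pose proof (Hge x). lia.
Qed.

Fixpoint ins (n : nat) (l : list nat) : list nat :=
  match l with [] => [n] | a :: l' => if n <? a then n :: a :: l' else a :: ins n l' end.

Lemma ins_spec : forall n l, incr l -> ~ In n l -> incr (ins n l) /\ Permutation (ins n l) (n :: l).
Proof.
  intros n l. induction l as [|a l IH]; intros Hl Hn.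
  - simpl. split; [split; [intros x []|exact I]|constructor; constructor].
  - simpl. destruct (Nat.ltb_spec n a).
    + split; [|apply Permutation_refl]. split; [|exact Hl].
      intros x [<-|Hx]; [lia|]. pose proof (proj1 Hl x Hx). lia.
    + destruct Hl as [Ha Hl]. assert (Hn' : ~ In n l) by (intro; apply Hn; right; auto).
      destruct (IH Hl Hn') as [H1 H2]. split.
      * split; [|exact H1]. intros x Hx. apply (Permutation_in _ H2) in Hx.
        destruct Hx as [<-|Hx]; [|auto]. assert (n <> a) by (intro; apply Hn; left; auto). lia.
      * eapply perm_trans; [apply perm_skip; exact H2|apply perm_swap].
Qed.

Lemma sort_pre : forall {G : Type} (f : nat -> G) (T : nat -> Prop) ys, NoDup ys ->
  (forall y, In y ys -> exists n, T n /\ f n = y) ->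
  exists l, incr l /\ length l = length ys /\ (forall x, In x l -> T x) /\ Permutation (map f l) ys.
Proof.
  intros G f T ys. induction ys as [|y ys IH]; intros Hnd Hy.
  - exists []. simpl. repeat split; auto. intros x [].
  - inversion Hnd as [|y0 ys0 Hyn Hnd0]; subst.
    destruct IH as [l [H1 [H2 [H3 H4]]]]; auto.
    { intros z Hz. apply Hy. right; auto. }
    destruct (Hy y (or_introl eq_refl)) as [n [Tn <-]].
    assert (Hnl : ~ In n l).
    { intro H. apply Hyn. apply (Permutation_in _ H4). apply in_map. auto. }
    destruct (ins_spec n l H1 Hnl) as [J1 J2].
    exists (ins n l). split; [auto|split; [|split]].
    + rewrite (Permutation_length J2). simpl. auto.
    + intros x Hx. apply (Permutation_in _ J2) in Hx. destruct Hx as [<-|Hx]; auto.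
    + eapply perm_trans; [apply Permutation_map; exact J2|]. simpl. apply perm_skip. exact H4.
Qed.
Lemma inj_notin : forall {G : Type} (F : nat -> G), (forall i j, F i = F j -> i = j) ->
  forall l : list G, exists n, ~ In (F n) l.
Proof.
  intros G F HF l. apply NNPP. intro H.
  assert (Hall : forall n, In (F n) l) by (intro n; apply NNPP; intro; apply H; eauto).
  assert (Hnd : NoDup (map F (seq 0 (S (length l))))).
  { apply FinFun.Injective_map_NoDup; [intros x y; apply HF|apply seq_NoDup]. }
  assert (H0 : incl (map F (seq 0 (S (length l)))) l).
  { intros x Hx. apply in_map_iff in Hx. destruct Hx as [n [<- _]]. apply Hall. }
  pose proof (NoDup_incl_length Hnd H0) as Hl. rewrite length_map, length_seq in Hl. lia.
Qed.

Lemma count_inf : forall {G : Type} (Y : G -> Prop), countably_infinite Y -> infinite Y.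
Proof.
  intros G Y [f [Hf HY]] l. destruct (inj_notin f Hf l) as [n Hn].
  exists (f n). split; auto. apply HY. eauto.
Qed.

Lemma inf_enum : forall {G : Type} (X : G -> Prop), infinite X ->
  exists f : nat -> G, (forall i j, f i = f j -> i = j) /\ (forall n, X (f n)).
Proof.
  intros G X HX.
  destruct (HX []) as [x0 _].
  set (g := fun l : list G => epsilon (inhabits x0) (fun x => X x /\ ~ In x l)).
  assert (Hg : forall l, X (g l) /\ ~ In (g l) l) by (intro l; apply epsilon_spec; apply HX).
  set (h := fix h (n : nat) : list G := match n with 0 => [] | S n' => g (h n') :: h n' end).
  assert (Hh : forall i d, In (g (h i)) (h (S d + i))).
  { intros i d. induction d; simpl in *; auto. }
  exists (fun n => g (h n)). split; [|intro; apply Hg].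
  intros i j E. destruct (Nat.lt_trichotomy i j) as [H|[H|H]]; auto; exfalso.
  - pose proof (Hh i (j - i - 1)). replace (S (j - i - 1) + i) with j in H0 by lia.
    rewrite E in H0. apply (proj2 (Hg (h j))). auto.
  - pose proof (Hh j (i - j - 1)). replace (S (i - j - 1) + j) with i in H0 by lia.
    rewrite <- E in H0. apply (proj2 (Hg (h i))). auto.
Qed.

Lemma take_k : forall {G : Type} (Y : G -> Prop) (g : nat -> G) k,
  (forall i j, g i = g j -> i = j) -> (forall n, Y (g n)) ->
  exists xs, length xs = k /\ NoDup xs /\ forall x, In x xs -> Y x.
Proof.
  intros G Y g k Hg HY. exists (map g (seq 0 k)). split; [rewrite length_map, length_seq; auto|split].
  - apply FinFun.Injective_map_NoDup; [intros x y; apply Hg|apply seq_NoDup].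
  - intros x Hx. apply in_map_iff in Hx. destruct Hx as [n [<- _]]. auto.
Qed.

Lemma backward : forall {G : Type} (mul : G -> G -> G) (inv : G -> G) (one : G) ms (A : G -> Prop),
  (forall X : G -> Prop, infinite X ->
        exists Y : G -> Prop, (forall y, Y y -> X y) /\ countably_infinite Y /\
          (forall ys : list G, length ys = length ms -> NoDup ys ->
             (forall y, In y ys -> Y y) -> A (prodpow mul inv one ms ys))) ->
  ramsey_product mul inv one ms A.
Proof.
  intros G mul inv one ms A H X HX.
  destruct (H X HX) as [Y [HYX [[g [Hg HgY]] HYA]]].
  destruct (take_k Y g (length ms) Hg) as [xs [H1 [H2 H3]]].
  { intro n. apply HgY. eauto. }
  exists xs. split; [auto|split; [auto|split]].
  - intros x Hx. apply HYX. auto.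
  - intros ys Hp. apply HYA.
    + rewrite <- (Permutation_length Hp). auto.
    + exact (Permutation_NoDup Hp H2).
    + intros y Hy. apply H3. apply (Permutation_in _ (Permutation_sym Hp)). auto.
Qed.

Lemma forward : forall {G : Type} (mul : G -> G -> G) (inv : G -> G) (one : G) ms (A : G -> Prop),
  ramsey_product mul inv one ms A ->
  (forall X : G -> Prop, infinite X ->
        exists Y : G -> Prop, (forall y, Y y -> X y) /\ countably_infinite Y /\
          (forall ys : list G, length ys = length ms -> NoDup ys ->
             (forall y, In y ys -> Y y) -> A (prodpow mul inv one ms ys))).
Proof.
  intros G mul inv one ms A HA X HX.
  destruct (inf_enum X HX) as [f [Hf HfX]].
  set (P := fun l => forall ys, Permutation (map f l) ys -> A (prodpow mul inv one ms ys)).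
  destruct (ramsey (length ms) P (fun _ => True)) as [[T b] [_ [HT Hhom]]].
  { intro n. exists n. auto. }
  simpl in HT, Hhom.
  destruct (enum_unb T HT) as [e [He HeT]].
  set (Y := fun y => exists n, T n /\ f n = y).
  assert (HYc : countably_infinite Y).
  { exists (fun n => f (e n)). split.
    - intros i j E. apply He, Hf, E.
    - intro y. split.
      + intros [n [Tn <-]]. destruct (proj1 (HeT n) Tn) as [m <-]. eauto.
      + intros [m <-]. exists (e m). split; auto. apply HeT. eauto. }
  exists Y. split; [intros y [n [_ <-]]; auto|split; [exact HYc|]].
  destruct (HA Y (count_inf _ HYc)) as [xs [Hl [Hnd [HxY Hperm]]]].
  destruct (sort_pre f T xs Hnd HxY) as [l [L1 [L2 [L3 L4]]]].
  assert (Hb : b = true).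
  { apply (Hhom l); [congruence|auto|auto|].
    intros ys Hp. apply Hperm. eapply perm_trans; [apply Permutation_sym; exact L4|exact Hp]. }
  intros ys Hys Hndy HyY.
  destruct (sort_pre f T ys Hndy HyY) as [l' [M1 [M2 [M3 M4]]]].
  assert (HP : P l') by (apply (Hhom l'); auto; congruence).
  apply HP. exact M4.
Qed.

Theorem theorem5p1 (G : Type) (mul : G -> G -> G) (inv : G -> G) (one : G)
  (HG : group_axioms mul inv one) (Hinf : infinite (fun _ : G => True))
  (ms : list Z) :
  (forall A : G -> Prop,
     ramsey_product mul inv one ms A <->
     (forall X : G -> Prop, infinite X ->
        exists Y : G -> Prop, (forall y, Y y -> X y) /\ countably_infinite Y /\
          (forall ys : list G, length ys = length ms -> NoDup ys ->
             (forall y, In y ys -> Y y) -> A (prodpow mul inv one ms ys))))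
  /\ is_filter (ramsey_product mul inv one ms).
Proof.
  split.
  { intro A. split; [apply forward|apply backward]. }
  split; [|split; [|split]].
  - intros X HX. destruct (inf_enum X HX) as [f [Hf HfX]].
    destruct (take_k X f (length ms) Hf HfX) as [xs [H1 [H2 H3]]].
    exists xs. auto.
  - intro H. destruct (H _ Hinf) as [xs [_ [_ [_ Hp]]]].
    exact (Hp xs (Permutation_refl _)).
  - intros A B HA HAB X HX. destruct (HA X HX) as [xs [H1 [H2 [H3 H4]]]].
    exists xs. repeat split; auto.
  - intros A B HA HB. apply backward. intros X HX.
    destruct (forward _ _ _ _ _ HA X HX) as [Y [HYX [HYc HYA]]].
    destruct (forward _ _ _ _ _ HB Y (count_inf _ HYc)) as [Z [HZY [HZc HZB]]].
    exists Z. split; [auto|split; [auto|]].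
    intros ys H1 H2 H3. split; auto.
Qed.
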